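(* In the setting of the context, assume that $E_\varepsilon\to+\infty$ as $\varepsilon\to0^+$ and that there exists $\beta<2$ with $E_\varepsilon=O(\varepsilon^{-\beta})$ as $\varepsilon\to0^+$. Then the maximal solution $\varepsilon(t)$ of $\varepsilon'(t)=\varepsilon_0'\sqrt{\dfrac{m_s+m_f(\varepsilon^* )}{m_s+m_f(\varepsilon(t))}}$, $\varepsilon(0)=\varepsilon^*$, reaches $0$ in finite time with null velocity: there is $T<\infty$ with $\varepsilon(t)>0$ on $[0,T)$, $\varepsilon(t)\to0$ and $\varepsilon'(t)\to0$ as $t\to T^-$.
   Context: Notation: $e_2=(0,1)$. Geometry: $\mathsf C\subset\mathbb R^2$ is a smooth bounded connected open set, symmetric with respect to $\{\xi_1=0\}$, with $0\in\partial\mathsf C$, such that near the origin $\partial\mathsf C$ is a segment of $\{\xi_2=0\}$ with $\mathsf C$ locally above it. $S_0$ is compact, connected, symmetric with respect to $\{\xi_1=0\}$, and $\varepsilon^*>0$ is such that $S_\varepsilon:=S_0+\varepsilon e_2\subset\mathsf C$ for $0<\varepsilon\le\varepsilon^*$. For $0<\varepsilon\le\varepsilon^*$, $\varphi(\varepsilon,\cdot)\in H^1(\mathsf C\setminus S_\varepsilon)$ solves $\Delta\varphi=0$ in $\mathsf C\setminus S_\varepsilon$, $\partial_n\varphi=n_2$ on $\partial S_\varepsilon$, $\partial_n\varphi=0$ on $\partial\mathsf C$ ($n=(n_1,n_2)$ the unit normal pointing out of the fluid domain). The Dirichlet energy is $E_\varepsilon=\int_{\mathsf C\setminus S_\varepsilon}|\nabla\varphi(\varepsilon,\cdot)|^2$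 and the added mass is $m_f(\varepsilon)=\varrho_f E_\varepsilon$ with $\varrho_f>0$; $m_s>0$ and $\varepsilon_0'<0$ are given constants. *)

(* Defs.v *)
From Stdlib Require Import Reals.
From Coquelicot Require Import Coquelicot.
Open Scope R_scope.

Definition added_mass (rhof : R) (E : R -> R) (x : R) : R := rhof * E x.

Definition ode_rhs (ms rhof v0 estar : R) (E : R -> R) (x : R) : R :=
  v0 * sqrt ((ms + added_mass rhof E estar) / (ms + added_mass rhof E x)).

Definition is_solution (ms rhof v0 estar : R) (E : R -> R)
    (eps : R -> R) (T : R) : Prop :=
  0 < T /\
  eps 0 = estar /\
  (forall t, 0 <= t < T -> 0 < eps t <= estar) /\
  filterlim eps (at_right 0) (locally estar) /\
  (forall t, 0 < t < T -> is_derive eps t (ode_rhs ms rhof v0 estar E (eps t))).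

(* Main.v *)
Require Import Defs.
From Stdlib Require Import Reals Lra.
From Coquelicot Require Import Coquelicot.
Open Scope R_scope.
Lemma locally_pos x : 0 < x -> locally x (fun y => 0 < y).
Proof.
intros Hx. exists (mkposreal x Hx). intros y Hy. 
apply Rabs_lt_between' in Hy. simpl in Hy. lra.
Qed.
Lemma rmin_lip z y e : Rabs (Rmin z e - Rmin y e) <= Rabs (z - y).
Proof. unfold Rmin; destruct (Rle_dec z e), (Rle_dec y e); unfold Rabs; repeat destruct Rcase_abs; lra. Qed.
Lemma rmin_cont y e : filterlim (fun z => Rmin z e) (locally y) (locally (Rmin y e)).
Proof.
intros P [eps HP]. exists eps. intros z Hz. apply HP.
change (Rabs (Rmin z e - Rmin y e) < eps). eapply Rle_lt_trans. apply rmin_lip. exact Hz.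
Qed.
Lemma clamp_within (estar y : R) : 0 < estar -> 0 < y ->
  filterlim (fun z => Rmin z estar) (locally y) (within (fun u => 0 < u <= estar) (locally (Rmin y estar))).
Proof.
intros He Hy P HP. unfold within in HP.
pose proof (rmin_cont y estar _ HP) as H1. unfold filtermap in H1 |- *.
generalize (filter_and _ _ H1 (locally_pos y Hy)).
apply filter_imp. intros z [Hz1 Hz2]. apply Hz1. split.
apply Rmin_glb_lt; lra. apply Rmin_r.
Qed.
Definition gf (ms rhof v0 estar : R) (E : R -> R) (y : R) : R :=
  sqrt ((ms + rhof * E (Rmin y estar)) / (ms + rhof * E estar)) / (- v0).

Lemma gf_cont ms rhof v0 estar E
  (Hestar : 0 < estar)
  (HEcont : forall x, 0 < x <= estar ->
     filterlim E (within (fun y => 0 < y <= estar) (locally x)) (locally (E x)))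
  y : 0 < y -> continuous (gf ms rhof v0 estar E) y.
Proof.
intros Hy.
set (A := ms + rhof * E estar).
change (continuous (fun z => (fun u => sqrt ((ms + rhof * u) / A) / (- v0)) (E (Rmin z estar))) y).
apply continuous_comp.
- unfold continuous. eapply filterlim_comp. apply clamp_within; auto.
  apply HEcont. split. apply Rmin_glb_lt; lra. apply Rmin_r.
- apply (continuous_comp (fun u => sqrt ((ms + rhof * u) / A)) (fun w => w / (- v0))).
  apply (continuous_comp (fun u => (ms + rhof * u) / A) sqrt).
  apply (@ex_derive_continuous R_AbsRing R_NormedModule). auto_derive. auto.
  apply continuous_sqrt.
  apply (@ex_derive_continuous R_AbsRing R_NormedModule). auto_derive. auto.
Qed.
Definition Gf ms rhof v0 estar E (x : R) : R := RInt (gf ms rhof v0 estar E) x estar.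

Lemma gf_ex_RInt ms rhof v0 estar E
  (Hestar : 0 < estar)
  (HEcont : forall x, 0 < x <= estar ->
     filterlim E (within (fun y => 0 < y <= estar) (locally x)) (locally (E x)))
  a b : 0 < a -> 0 < b -> ex_RInt (gf ms rhof v0 estar E) a b.
Proof.
intros Ha Hb. apply (@ex_RInt_continuous R_CompleteNormedModule). intros z Hz. apply gf_cont; auto.
assert (0 < Rmin a b) by (apply Rmin_glb_lt; auto). lra.
Qed.

Lemma gf_lower ms rhof v0 estar E
  (Hms : 0 < ms) (Hrho : 0 < rhof) (Hv0 : v0 < 0) (Hestar : 0 < estar)
  (HEpos : forall x, 0 < x <= estar -> 0 <= E x) y :
  0 < y -> sqrt (ms / (ms + rhof * E estar)) / (- v0) <= gf ms rhof v0 estar E y.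
Proof.
intros Hy. unfold gf.
assert (H1 : 0 <= E estar) by (apply HEpos; lra).
assert (H2 : 0 <= E (Rmin y estar)).
{ apply HEpos. split. apply Rmin_glb_lt; lra. apply Rmin_r. }
assert (HA : 0 < ms + rhof * E estar) by nra.
unfold Rdiv. apply Rmult_le_compat_r. apply Rlt_le, Rinv_0_lt_compat; lra.
apply sqrt_le_1_alt. apply Rmult_le_compat_r. apply Rlt_le, Rinv_0_lt_compat; lra. nra.
Qed.

Lemma gf_lower_pos ms rhof v0 estar E
  (Hms : 0 < ms) (Hrho : 0 < rhof) (Hv0 : v0 < 0) (Hestar : 0 < estar)
  (HEpos : forall x, 0 < x <= estar -> 0 <= E x) :
  0 < sqrt (ms / (ms + rhof * E estar)) / (- v0).
Proof.
assert (H1 : 0 <= E estar) by (apply HEpos; lra).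
assert (HA : 0 < ms + rhof * E estar) by nra.
apply Rdiv_lt_0_compat; [|lra]. apply sqrt_lt_R0. apply Rdiv_lt_0_compat; lra.
Qed.

Lemma Gf_derive ms rhof v0 estar E
  (Hestar : 0 < estar)
  (HEcont : forall x, 0 < x <= estar ->
     filterlim E (within (fun y => 0 < y <= estar) (locally x)) (locally (E x)))
  x : 0 < x -> is_derive (Gf ms rhof v0 estar E) x (- gf ms rhof v0 estar E x).
Proof.
intros Hx. apply (is_derive_RInt' (gf ms rhof v0 estar E) (Gf ms rhof v0 estar E) x estar).
- generalize (locally_pos x Hx). apply filter_imp. intros a Ha.
  unfold Gf. apply (@RInt_correct R_CompleteNormedModule). apply gf_ex_RInt; auto.
- apply gf_cont; auto.
Qed.

Lemma Gf_estar ms rhof v0 estar E : Gf ms rhof v0 estar E estar = 0.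
Proof. unfold Gf. exact (@RInt_point R_CompleteNormedModule estar _). Qed.

Lemma Gf_decr ms rhof v0 estar E
  (Hms : 0 < ms) (Hrho : 0 < rhof) (Hv0 : v0 < 0) (Hestar : 0 < estar)
  (HEpos : forall x, 0 < x <= estar -> 0 <= E x)
  (HEcont : forall x, 0 < x <= estar ->
     filterlim E (within (fun y => 0 < y <= estar) (locally x)) (locally (E x)))
  x y : 0 < x -> x <= y ->
  Gf ms rhof v0 estar E y + sqrt (ms / (ms + rhof * E estar)) / (- v0) * (y - x)
    <= Gf ms rhof v0 estar E x.
Proof.
intros Hx Hxy. unfold Gf.
rewrite <- (RInt_Chasles _ x y estar) by (apply gf_ex_RInt; auto; lra).
set (c := sqrt (ms / (ms + rhof * E estar)) / (- v0)).
assert (RInt (fun _ => c) x y <= RInt (gf ms rhof v0 estar E) x y).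
{ apply RInt_le; auto. apply ex_RInt_const. apply gf_ex_RInt; auto; lra.
  intros z Hz. apply gf_lower; auto; lra. }
rewrite RInt_const in H. change (scal (y - x) c) with ((y-x)*c) in H.
change (plus ?a ?b) with (a + b). lra.
Qed.
Lemma exp_le_mono a b : a <= b -> exp a <= exp b.
Proof. intros H. destruct (Rle_lt_or_eq_dec a b H) as [H1|H1]. left; apply exp_increasing; auto. subst; lra. Qed.

Lemma Gf_bounded ms rhof v0 estar E
  (Hms : 0 < ms) (Hrho : 0 < rhof) (Hv0 : v0 < 0) (Hestar : 0 < estar)
  (HEpos : forall x, 0 < x <= estar -> 0 <= E x)
  (HEcont : forall x, 0 < x <= estar ->
     filterlim E (within (fun y => 0 < y <= estar) (locally x)) (locally (E x)))
  (HEbig : exists beta, beta < 2 /\ exists C delta, 0 < delta /\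
     forall x, 0 < x < delta -> Rabs (E x) <= C * Rpower x (- beta)) :
  exists B, forall x, 0 < x -> Gf ms rhof v0 estar E x <= B.
Proof.
destruct HEbig as [beta [Hb2 [C [delta [Hdel HE]]]]].
set (d := Rmin (Rmin delta estar) 1).
assert (Hd : 0 < d) by (unfold d; repeat apply Rmin_glb_lt; lra).
assert (Hd1 : d <= delta /\ d <= estar /\ d <= 1).
{ unfold d. split; [|split].
  eapply Rle_trans; [apply Rmin_l|apply Rmin_l].
  eapply Rle_trans; [apply Rmin_l|apply Rmin_r]. apply Rmin_r. }
assert (HC : 0 <= C).
{ assert (H0 := HE (d/2) ltac:(lra)). unfold Rpower in H0.
  assert (0 < exp (- beta * ln (d/2))) by apply exp_pos.
  assert (0 <= Rabs (E (d/2))) by apply Rabs_pos. nra. }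
set (b := Rmax beta 0).
assert (Hb : beta <= b /\ 0 <= b /\ b < 2).
{ unfold b. split; [apply Rmax_l|split; [apply Rmax_r|]]. apply Rmax_lub_lt; lra. }
set (g := b / 2).
set (A := ms + rhof * E estar).
assert (HA : 0 < A) by (assert (0 <= E estar) by (apply HEpos; lra); unfold A; nra).
set (K2 := ms + rhof * C).
assert (HK2 : 0 < K2) by (unfold K2; nra).
set (kk := sqrt (K2 / A) / (- v0)).
assert (Hkk : 0 < kk) by (unfold kk; apply Rdiv_lt_0_compat; [apply sqrt_lt_R0; apply Rdiv_lt_0_compat; lra| lra]).
set (hh := fun y => kk * (1 + exp (- g * ln y))).
set (H := fun y => kk * (y + exp ((1 - g) * ln y) / (1 - g))).
assert (Hpt : forall y, 0 < y < d -> gf ms rhof v0 estar E y <= hh y).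
{ intros y Hy. unfold gf, hh.
  rewrite Rmin_left by lra.
  set (w := exp (- g * ln y)).
  assert (Hw : 0 < w) by apply exp_pos.
  assert (Hlny : ln y < 0) by (rewrite <- ln_1; apply ln_increasing; lra).
  assert (HEy : E y <= C * (w * w)).
  { assert (H0 := HE y ltac:(lra)). unfold Rpower in H0.
    assert (E y <= C * exp (- beta * ln y)) by (eapply Rle_trans; [apply Rle_abs|exact H0]).
    assert (exp (- beta * ln y) <= w * w).
    { unfold w. rewrite <- exp_plus. apply exp_le_mono. unfold g. nra. }
    nra. }
  assert (Hq : ms + rhof * E y <= K2 * ((1 + w) * (1 + w))) .
  { unfold K2. assert (rhof * E y <= rhof * (C * (w * w))) by (apply Rmult_le_compat_l; lra).
    assert (0 <= rhof * C) by nra. assert (0 <= w) by lra. nra. }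
  assert (Hs : sqrt ((ms + rhof * E y) / A) <= sqrt (K2 / A) * (1 + w)).
  { rewrite <- (sqrt_square (1 + w)) by lra. rewrite <- sqrt_mult.
    apply sqrt_le_1_alt. unfold Rdiv. 
    replace (K2 * / A * ((1 + w) * (1 + w))) with ((K2 * ((1 + w) * (1 + w))) * / A) by ring.
    apply Rmult_le_compat_r. apply Rlt_le, Rinv_0_lt_compat; lra. exact Hq.
    apply Rlt_le, Rdiv_lt_0_compat; lra. nra. }
  unfold kk. fold A.
  replace (sqrt (K2 / A) / - v0 * (1 + w)) with ((sqrt (K2 / A) * (1 + w)) / - v0) by (field; lra).
  unfold Rdiv at 1 3. apply Rmult_le_compat_r. apply Rlt_le, Rinv_0_lt_compat; lra. exact Hs. }
assert (Hg1 : 0 <= g < 1) by (unfold g; lra).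
assert (HH : forall y, 0 < y -> is_derive H y (hh y)).
{ intros y Hy. unfold H, hh. auto_derive. lra.
  replace ((1 - g) * ln y) with (- g * ln y + ln y) by ring.
  rewrite exp_plus, exp_ln by lra. field. split; lra. }
assert (Hhc : forall y, 0 < y -> continuous hh y).
{ intros y Hy. apply (@ex_derive_continuous R_AbsRing R_NormedModule). unfold hh. auto_derive. lra. }
assert (HHd : 0 <= H d).
{ unfold H. assert (0 < exp ((1 - g) * ln d)) by apply exp_pos.
  assert (0 < exp ((1 - g) * ln d) / (1 - g)) by (apply Rdiv_lt_0_compat; lra). nra. }
exists (H d + Gf ms rhof v0 estar E d). intros x Hx.
destruct (Rlt_or_le x d) as [Hxd|Hxd].
- assert (Hgx : Gf ms rhof v0 estar E x = RInt (gf ms rhof v0 estar E) x d + Gf ms rhof v0 estar E d).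
  { unfold Gf. rewrite <- (RInt_Chasles _ x d estar) by (apply gf_ex_RInt; auto; lra). reflexivity. }
  assert (Hexh : ex_RInt hh x d).
  { apply (@ex_RInt_continuous R_CompleteNormedModule). intros z Hz. apply Hhc.
    rewrite Rmin_left in Hz by lra. lra. }
  assert (Hle : RInt (gf ms rhof v0 estar E) x d <= RInt hh x d).
  { apply RInt_le; auto. lra. apply gf_ex_RInt; auto; lra.
    intros z Hz. apply Hpt. lra. }
  assert (Hint : RInt hh x d = H d - H x).
  { apply is_RInt_unique. apply (is_RInt_derive H hh).
    intros z Hz. rewrite Rmin_left in Hz by lra. apply HH; lra.
    intros z Hz. rewrite Rmin_left in Hz by lra. apply Hhc; lra. }
  assert (HHx : 0 <= H x).
  { unfold H. assert (0 < exp ((1 - g) * ln x)) by apply exp_pos.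
    assert (0 < exp ((1 - g) * ln x) / (1 - g)) by (apply Rdiv_lt_0_compat; lra). nra. }
  lra.
- assert (Hdec := Gf_decr ms rhof v0 estar E Hms Hrho Hv0 Hestar HEpos HEcont d x Hd Hxd).
  assert (Hc := gf_lower_pos ms rhof v0 estar E Hms Hrho Hv0 Hestar HEpos).
  nra.
Qed.
Lemma inv_deriv (G F : R -> R) t d : d <> 0 -> is_derive G (F t) d ->
  (exists de, 0 < de /\ forall s, Rabs (s - t) < de -> G (F s) = s) ->
  (forall eta, 0 < eta -> exists de, 0 < de /\ forall s, Rabs (s - t) < de -> Rabs (F s - F t) < eta) ->
  is_derive F t (/ d).
Proof.
intros Hd HG [d0 [Hd0 HGF]] Hc.
apply is_derive_Reals in HG. apply is_derive_Reals.
intros eps Heps.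
assert (Had : 0 < Rabs d) by (apply Rabs_pos_lt; auto).
set (e1 := Rmin (Rabs d / 2) (eps * (Rabs d * Rabs d) / 2)).
assert (He1 : 0 < e1) by (unfold e1; apply Rmin_glb_lt; [lra|]; apply Rdiv_lt_0_compat; [|lra]; apply Rmult_lt_0_compat; nra).
destruct (HG e1 He1) as [d1 Hd1].
destruct (Hc d1 (cond_pos d1)) as [d2 [Hd2 Hc2]].
assert (Hdd : 0 < Rmin d0 d2) by (apply Rmin_glb_lt; auto).
exists (mkposreal _ Hdd). intros h Hh0 Hh. simpl in Hh.
assert (Hh1 : Rabs h < d0) by (eapply Rlt_le_trans; [exact Hh|apply Rmin_l]).
assert (Hh2 : Rabs h < d2) by (eapply Rlt_le_trans; [exact Hh|apply Rmin_r]).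
assert (HGt : G (F t) = t) by (apply HGF; rewrite Rminus_diag, Rabs_R0; auto).
assert (HGth : G (F (t + h)) = t + h) by (apply HGF; replace (t + h - t) with h by ring; auto).
set (k := F (t + h) - F t).
assert (Hk0 : k <> 0).
{ intros Hk. unfold k in Hk. assert (F (t + h) = F t) by lra. rewrite H in HGth. lra. }
assert (Hk1 : Rabs k < d1).
{ apply Hc2. replace (t + h - t) with h by ring. auto. }
specialize (Hd1 k Hk0 Hk1).
replace (F t + k) with (F (t + h)) in Hd1 by (unfold k; ring).
rewrite HGth, HGt in Hd1. replace (t + h - t) with h in Hd1 by ring.
fold k. set (q := h / k) in Hd1.
assert (Hq0 : q <> 0) by (unfold q; apply Rmult_integral_contrapositive; split; auto; apply Rinv_neq_0_compat; auto).
replace (k / h - / d) with ((d - q) / (q * d)) by (unfold q; field; auto).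
rewrite Rabs_div by (apply Rmult_integral_contrapositive; auto).
rewrite Rabs_mult.
assert (Haq : Rabs d / 2 <= Rabs q).
{ assert (e1 <= Rabs d / 2) by apply Rmin_l.
  assert (Rabs d - Rabs q <= Rabs (d - q)) by apply Rabs_triang_inv.
  rewrite Rabs_minus_sym in H0. lra. }
rewrite Rabs_minus_sym in Hd1.
assert (HP : 0 < Rabs q * Rabs d) by (apply Rmult_lt_0_compat; lra).
apply Rmult_lt_reg_r with (Rabs q * Rabs d); auto.
unfold Rdiv. rewrite Rmult_assoc, Rinv_l, Rmult_1_r by lra.
assert (e1 <= eps * (Rabs d * Rabs d) / 2) by apply Rmin_r.
nra.
Qed.
From Stdlib Require Import ClassicalEpsilon.

Lemma rmax_lip z y e : Rabs (Rmax e z - Rmax e y) <= Rabs (z - y).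
Proof. unfold Rmax; destruct (Rle_dec e z), (Rle_dec e y); unfold Rabs; repeat destruct Rcase_abs; lra. Qed.
Lemma rmax_cont y e : filterlim (fun z => Rmax e z) (locally y) (locally (Rmax e y)).
Proof.
intros P [eps HP]. exists eps. intros z Hz. apply HP.
change (Rabs (Rmax e z - Rmax e y) < eps). eapply Rle_lt_trans. apply rmax_lip. exact Hz.
Qed.

Lemma zero_deriv_const (h : R -> R) T2 :
  (forall s, 0 < s < T2 -> is_derive h s 0) -> filterlim h (at_right 0) (locally 0) ->
  forall s, 0 < s < T2 -> h s = 0.
Proof.
intros Hd Hl s Hs.
assert (Hr : forall r, 0 < r < s -> h r = h s).
{ intros r Hr. destruct (MVT_gen h r s (fun _ => 0)) as [c [Hc Hc2]].
  - rewrite Rmin_left, Rmax_right by lra. intros x Hx. apply Hd. lra.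
  - rewrite Rmin_left, Rmax_right by lra. intros x Hx. apply continuity_pt_filterlim.
    apply (@ex_derive_continuous R_AbsRing R_NormedModule). eexists. apply Hd. lra.
  - lra. }
apply NNPP. intros Hne.
assert (He : 0 < Rabs (h s)) by (apply Rabs_pos_lt; auto).
destruct (Hl (fun y => Rabs (y - 0) < Rabs (h s))) as [de Hde].
{ exists (mkposreal _ He). intros y Hy. exact Hy. }
assert (Hm : 0 < Rmin de s) by (apply Rmin_glb_lt; [apply cond_pos|lra]).
assert (H1 := Rmin_l de s). assert (H2 := Rmin_r de s).
specialize (Hde (Rmin de s / 2)).
simpl in Hde. rewrite Hr in Hde by lra. rewrite Rminus_0_r in Hde.
assert (Rabs (h s) < Rabs (h s)); [|lra].
apply Hde; [|lra]. change (Rabs (Rmin de s / 2 - 0) < de). rewrite Rminus_0_r, Rabs_pos_eq; lra.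
Qed.

Lemma ode_rhs_eq ms rhof v0 estar E x
  (Hms : 0 < ms) (Hrho : 0 < rhof) (Hv0 : v0 < 0) (Hestar : 0 < estar)
  (HEpos : forall x, 0 < x <= estar -> 0 <= E x) :
  0 < x <= estar -> ode_rhs ms rhof v0 estar E x = / (- gf ms rhof v0 estar E x).
Proof.
intros Hx. unfold ode_rhs, gf, added_mass. rewrite Rmin_left by lra.
assert (0 <= E estar) by (apply HEpos; lra). assert (0 <= E x) by (apply HEpos; lra).
assert (HA : 0 < ms + rhof * E estar) by nra.
assert (HB : 0 < ms + rhof * E x) by nra.
replace ((ms + rhof * E estar) / (ms + rhof * E x)) with (/ ((ms + rhof * E x) / (ms + rhof * E estar))) by (field; lra).
rewrite sqrt_inv.
assert (0 < sqrt ((ms + rhof * E x) / (ms + rhof * E estar))) by (apply sqrt_lt_R0; apply Rdiv_lt_0_compat; lra).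
field. lra.
Qed.

Lemma gf_pos ms rhof v0 estar E
  (Hms : 0 < ms) (Hrho : 0 < rhof) (Hv0 : v0 < 0) (Hestar : 0 < estar)
  (HEpos : forall x, 0 < x <= estar -> 0 <= E x) y :
  0 < y -> 0 < gf ms rhof v0 estar E y.
Proof.
intros Hy. eapply Rlt_le_trans. apply (gf_lower_pos ms rhof v0 estar E); auto.
apply gf_lower; auto.
Qed.

Theorem lemma1p3
  (ms rhof v0 estar : R) (E : R -> R)
  (Hms : 0 < ms) (Hrho : 0 < rhof) (Hv0 : v0 < 0) (Hestar : 0 < estar)
  (HEpos : forall x, 0 < x <= estar -> 0 <= E x)
  (HEcont : forall x, 0 < x <= estar ->
     filterlim E (within (fun y => 0 < y <= estar) (locally x)) (locally (E x)))
  (HEinf : filterlim E (at_right 0) (Rbar_locally p_infty))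
  (HEbig : exists beta, beta < 2 /\ exists C delta, 0 < delta /\
     forall x, 0 < x < delta -> Rabs (E x) <= C * Rpower x (- beta)) :
  exists (T : R) (eps : R -> R),
    is_solution ms rhof v0 estar E eps T /\
    (* maximality / uniqueness: every solution lives inside [0,T) and agrees *)
    (forall (eps2 : R -> R) (T2 : R), is_solution ms rhof v0 estar E eps2 T2 ->
        T2 <= T /\ forall t, 0 <= t < T2 -> eps2 t = eps t) /\
    filterlim eps (at_left T) (locally 0) /\
    filterlim (fun t => Derive eps t) (at_left T) (locally 0).
Proof.
set (G := Gf ms rhof v0 estar E).
set (gg := gf ms rhof v0 estar E).
assert (HG0 : G estar = 0) by apply Gf_estar.
assert (Hc0 := gf_lower_pos ms rhof v0 estar E Hms Hrho Hv0 Hestar HEpos).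
assert (Hdecr : forall x y, 0 < x -> x < y -> G y < G x).
{ intros x y Hx Hxy. assert (Hd := Gf_decr ms rhof v0 estar E Hms Hrho Hv0 Hestar HEpos HEcont x y Hx ltac:(lra)).
  fold G in Hd. nra. }
assert (Hdecr' : forall x y, 0 < x -> x <= y -> G y <= G x).
{ intros x y Hx Hxy. destruct (Rle_lt_or_eq_dec x y Hxy). left; auto. subst; lra. }
assert (Hinj : forall x y, 0 < x -> 0 < y -> G x = G y -> x = y).
{ intros x y Hx Hy Hxy. destruct (Rtotal_order x y) as [H|[H|H]]; auto.
  apply Hdecr in H; auto; lra. apply Hdecr in H; auto; lra. }
assert (Hder : forall x, 0 < x -> is_derive G x (- gg x)).
{ intros x Hx. apply Gf_derive; auto. }
assert (Hcont : forall x, 0 < x -> continuous G x).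
{ intros x Hx. apply (@ex_derive_continuous R_AbsRing R_NormedModule). eexists. apply Hder; auto. }
destruct (Gf_bounded ms rhof v0 estar E Hms Hrho Hv0 Hestar HEpos HEcont HEbig) as [B HB].
set (S := fun y => exists x, 0 < x <= estar /\ y = G x).
destruct (completeness S) as [T [HTub HTlub]].
{ exists B. intros y [x [Hx ->]]. apply HB; lra. }
{ exists (G estar). exists estar; split; auto; lra. }
assert (HT1 : forall x, 0 < x <= estar -> G x <= T).
{ intros x Hx. apply HTub. exists x; auto. }
assert (HTlt : forall x, 0 < x <= estar -> G x < T).
{ intros x Hx. apply Rlt_le_trans with (G (x/2)). apply Hdecr; lra. apply HT1; lra. }
assert (HTpos : 0 < T) by (rewrite <- HG0; apply HTlt; lra).
assert (HT2 : forall t, t < T -> exists x, 0 < x <= estar /\ t < G x).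
{ intros t Ht. apply NNPP. intros Hn.
  assert (T <= t). { apply HTlub. intros y [x [Hx ->]].
    apply Rnot_lt_le. intros Hlt. apply Hn. exists x; auto. }
  lra. }
assert (Hsurj : forall t, 0 <= t < T -> exists x, 0 < x <= estar /\ G x = t).
{ intros t Ht. destruct (HT2 t ltac:(lra)) as [x0 [Hx0 Hx0t]].
  set (Gc := fun y => G (Rmax x0 y)).
  assert (HGc : continuity Gc).
  { intros y. apply continuity_pt_filterlim. unfold Gc.
    eapply filterlim_comp. apply rmax_cont. apply Hcont.
    eapply Rlt_le_trans; [|apply Rmax_l]. lra. }
  destruct (IVT_gen Gc x0 estar t HGc) as [x [Hx Hxt]].
  { unfold Gc. rewrite Rmax_left by lra. rewrite Rmax_right by lra. rewrite HG0.
    rewrite Rmin_right by lra. rewrite Rmax_left by lra. lra. }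
  rewrite Rmin_left in Hx by lra. rewrite Rmax_right in Hx by lra.
  exists x. unfold Gc in Hxt. rewrite Rmax_right in Hxt by lra. split; auto. lra. }
set (F := fun t => epsilon (inhabits 0) (fun x => 0 < x <= estar /\ G x = t)).
assert (HF : forall t, 0 <= t < T -> (0 < F t <= estar) /\ G (F t) = t).
{ intros t Ht. unfold F. apply epsilon_spec. apply Hsurj; auto. }
assert (HF0 : F 0 = estar).
{ destruct (HF 0 ltac:(lra)) as [H1 H2]. apply Hinj; try lra. }
assert (HFcont : forall t, 0 <= t < T -> forall eta, 0 < eta -> exists de, 0 < de /\
     forall s, 0 <= s < T -> Rabs (s - t) < de -> Rabs (F s - F t) < eta).
{ intros t Ht eta Heta. destruct (HF t Ht) as [Hx HGx].
  set (x := F t) in *.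
  set (x1 := Rmax (x - eta / 2) (x / 2)). set (x2 := x + eta / 2).
  assert (Hx1 : 0 < x1 /\ x1 < x /\ x - eta < x1).
  { unfold x1. split. eapply Rlt_le_trans; [|apply Rmax_r]; lra.
    split. apply Rmax_lub_lt; lra. eapply Rlt_le_trans; [|apply Rmax_l]; lra. }
  assert (HG1 : t < G x1) by (rewrite <- HGx; apply Hdecr; lra).
  assert (HG2 : G x2 < t) by (rewrite <- HGx; apply Hdecr; unfold x2; lra).
  exists (Rmin (G x1 - t) (t - G x2)). split. apply Rmin_glb_lt; lra.
  intros s Hs Hst.
  assert (Hs1 : s < G x1) by (assert (H := Rmin_l (G x1 - t) (t - G x2)); apply Rabs_lt_between' in Hst; lra).
  assert (Hs2 : G x2 < s) by (assert (H := Rmin_r (G x1 - t) (t - G x2)); apply Rabs_lt_between' in Hst; lra).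
  destruct (HF s Hs) as [Hy HGy].
  assert (x1 < F s).
  { apply Rnot_le_lt. intros Hle. assert (G x1 <= G (F s)) by (apply Hdecr'; lra). lra. }
  assert (F s < x2).
  { apply Rnot_le_lt. intros Hle. assert (G x2 >= G (F s)) by (apply Rle_ge, Hdecr'; unfold x2 in *; lra). lra. }
  apply Rabs_lt_between'. unfold x2 in *. lra. }
assert (HFder : forall t, 0 < t < T -> is_derive F t (ode_rhs ms rhof v0 estar E (F t))).
{ intros t Ht. destruct (HF t ltac:(lra)) as [Hx HGx].
  rewrite ode_rhs_eq by auto.
  assert (Hg := gf_pos ms rhof v0 estar E Hms Hrho Hv0 Hestar HEpos (F t) ltac:(lra)).
  apply (inv_deriv G F t). intro; lra.
  apply Hder; lra.
  exists (Rmin t (T - t)). split. apply Rmin_glb_lt; lra.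
  intros s Hs. assert (H1 := Rmin_l t (T - t)). assert (H2 := Rmin_r t (T - t)).
  apply Rabs_lt_between' in Hs. apply HF. lra.
  intros eta Heta. destruct (HFcont t ltac:(lra) eta Heta) as [de [Hde Hde2]].
  exists (Rmin de (Rmin t (T - t))). split. repeat apply Rmin_glb_lt; lra.
  intros s Hs. assert (H0 := Rmin_l de (Rmin t (T - t))). assert (H1 := Rmin_r de (Rmin t (T - t))).
  assert (H2 := Rmin_l t (T - t)). assert (H3 := Rmin_r t (T - t)).
  apply Hde2. apply Rabs_lt_between' in Hs. lra. lra. }
assert (Hsol : is_solution ms rhof v0 estar E F T).
{ split; [auto|split; [auto|split; [|split]]].
  - intros t Ht. apply HF; auto.
  - intros P [eta HP]. destruct (HFcont 0 ltac:(lra) eta (cond_pos eta)) as [de [Hde Hde2]].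
    assert (Hr : 0 < Rmin de T) by (apply Rmin_glb_lt; lra).
    exists (mkposreal _ Hr). intros s Hs Hpos. apply HP.
    change (Rabs (F s - estar) < eta). rewrite <- HF0.
    assert (H0 := Rmin_l de T). assert (H1 := Rmin_r de T).
    apply Rabs_lt_between' in Hs. simpl in Hs.
    apply Hde2. lra. apply Rabs_lt_between'. lra.
  - exact HFder. }
assert (HFsmall : forall e, 0 < e -> exists r, 0 < r /\ forall s, T - r < s < T -> 0 < F s < e).
{ intros e He. set (e' := Rmin e estar).
  assert (He' : 0 < e' <= estar) by (unfold e'; split; [apply Rmin_glb_lt; lra|apply Rmin_r]).
  assert (He'' : e' <= e) by apply Rmin_l.
  assert (HGe1 : G e' < T) by (apply HTlt; auto).
  assert (HGe2 : 0 <= G e') by (rewrite <- HG0; apply Hdecr'; lra).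
  exists (T - G e'). split. lra.
  intros s Hs. destruct (HF s ltac:(lra)) as [Hx HGx]. split. lra.
  apply Rnot_le_lt. intros Hle. assert (G (F s) <= G e') by (apply Hdecr'; lra). lra. }
exists T, F. split; [exact Hsol|split; [|split]].
- intros eps2 T2 [HT2pos [He20 [He2r [He2lim He2d]]]].
  set (h := fun s => G (eps2 s) - s).
  assert (Hhd : forall s, 0 < s < T2 -> is_derive h s 0).
  { intros s Hs. destruct (He2r s ltac:(lra)) as [He1 He2].
    assert (Hc := is_derive_comp G eps2 s _ _ (Hder (eps2 s) He1) (He2d s Hs)).
    rewrite ode_rhs_eq in Hc by auto.
    assert (Hg := gf_pos ms rhof v0 estar E Hms Hrho Hv0 Hestar HEpos (eps2 s) He1). fold gg in Hg.
    fold gg in Hc. unfold scal in Hc; simpl in Hc; unfold mult in Hc; simpl in Hc.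
    replace (/ - gg (eps2 s) * - gg (eps2 s)) with 1 in Hc by (field; lra).
    assert (Hm := is_derive_minus _ _ s _ _ Hc (is_derive_id s)).
    replace 0 with (minus 1 (@one R_AbsRing)). exact Hm.
    change (1 + - 1 = 0). ring. }
  assert (Hh0 : filterlim h (at_right 0) (locally 0)).
  { assert (Hc : filterlim (fun s => G (eps2 s)) (at_right 0) (locally 0)).
    { eapply filterlim_comp. exact He2lim. rewrite <- HG0. apply Hcont; auto. }
    intros P [eta HP].
    assert (Hh2 : 0 < eta / 2) by (apply Rdiv_lt_0_compat; [apply cond_pos|lra]).
    assert (H1 := Hc (fun y => Rabs (y - 0) < eta / 2) ltac:(exists (mkposreal _ Hh2); intros y Hy; exact Hy)).
    assert (H2 : at_right 0 (fun s => Rabs s < eta / 2)).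
    { exists (mkposreal _ Hh2). intros y Hy _. change (Rabs (y - 0) < eta / 2) in Hy. rewrite Rminus_0_r in Hy. exact Hy. }
    unfold filtermap in H1 |- *.
    generalize (filter_and _ _ H1 H2). apply filter_imp. intros y [Hy1 Hy2]. apply HP.
    change (Rabs (h y - 0) < eta). unfold h. rewrite Rminus_0_r in *.
    replace (G (eps2 y) - y) with (G (eps2 y) + - y) by ring.
    eapply Rle_lt_trans. apply Rabs_triang. rewrite Rabs_Ropp.
    assert (eta / 2 + eta / 2 = eta) by field. lra. }
  assert (HGe : forall s, 0 <= s < T2 -> G (eps2 s) = s).
  { intros s Hs. destruct (Rle_lt_or_eq_dec 0 s (proj1 Hs)) as [Hs0|Hs0].
    - assert (H := zero_deriv_const h T2 Hhd Hh0 s ltac:(lra)). unfold h in H. lra.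
    - subst s. rewrite He20. auto. }
  assert (HT2T : T2 <= T).
  { apply Rnot_lt_le. intros Hlt. destruct (He2r T ltac:(lra)) as [He1 He2].
    assert (G (eps2 T) < T) by (apply HTlt; auto). rewrite HGe in H by lra. lra. }
  split; auto.
  intros t Ht. destruct (He2r t Ht). destruct (HF t ltac:(lra)).
  apply Hinj; try lra. rewrite HGe by auto. lra.
- intros P [eta HP].
  destruct (HFsmall eta (cond_pos eta)) as [r [Hr Hrs]].
  assert (Hr2 : 0 < Rmin r T) by (apply Rmin_glb_lt; lra).
  exists (mkposreal _ Hr2). intros s Hs Hlt. apply HP.
  change (Rabs (F s - 0) < eta). apply Rabs_lt_between' in Hs. simpl in Hs.
  assert (H1 := Rmin_l r T). destruct (Hrs s ltac:(lra)). apply Rabs_lt_between'. lra.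
- intros P [eta HP].
  set (A := ms + rhof * E estar).
  assert (HA : 0 < A) by (assert (0 <= E estar) by (apply HEpos; lra); unfold A; nra).
  set (q := eta / (- v0)).
  assert (Hq : 0 < q) by (apply Rdiv_lt_0_compat; [apply cond_pos|lra]).
  set (M := A / (q * q * rhof)).
  assert (HM : q * q * (rhof * M) = A) by (unfold M; field; split; lra).
  destruct (HEinf (fun y => M < y)) as [de Hde].
  { exists M. intros x Hx. exact Hx. }
  assert (Hd2 : 0 < Rmin (de / 2) estar) by (apply Rmin_glb_lt; [apply Rdiv_lt_0_compat; [apply cond_pos|lra]|lra]).
  destruct (HFsmall _ Hd2) as [r [Hr Hrs]].
  assert (Hr2 : 0 < Rmin r T) by (apply Rmin_glb_lt; lra).
  exists (mkposreal _ Hr2). intros s Hs Hlt. apply HP.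
  change (Rabs (Derive F s - 0) < eta). apply Rabs_lt_between' in Hs. simpl in Hs.
  assert (H1 := Rmin_l r T). assert (H2 := Rmin_r r T). destruct (Hrs s ltac:(lra)) as [Hx1 Hx2].
  assert (H3 := Rmin_l (de / 2) estar). assert (H4 := Rmin_r (de / 2) estar).
  rewrite (is_derive_unique _ _ _ (HFder s ltac:(lra))).
  rewrite Rminus_0_r. set (x := F s) in *.
  assert (HEx : M < E x).
  { apply Hde; [|lra]. change (Rabs (x - 0) < de). rewrite Rminus_0_r, Rabs_pos_eq; lra. }
  assert (HMpos : 0 < rhof * M) by nra.
  unfold ode_rhs, added_mass. fold A. set (BB := ms + rhof * E x).
  assert (HB' : rhof * M < BB) by (unfold BB; nra).
  assert (HAB : A / BB < q * q).
  { apply Rmult_lt_reg_r with BB; [lra|]. unfold Rdiv. rewrite Rmult_assoc, Rinv_l, Rmult_1_r by lra. nra. }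
  assert (Hsq : sqrt (A / BB) < q).
  { rewrite <- (sqrt_square q) by lra. apply sqrt_lt_1_alt. split; auto.
    apply Rlt_le, Rdiv_lt_0_compat; lra. }
  assert (0 <= sqrt (A / BB)) by apply sqrt_pos.
  rewrite Rabs_mult, Rabs_left by lra. rewrite (Rabs_pos_eq (sqrt _)) by auto.
  unfold q in Hsq. apply Rmult_lt_reg_r with (/ - v0). apply Rinv_0_lt_compat; lra.
  replace (- v0 * sqrt (A / BB) * / - v0) with (sqrt (A / BB)) by (field; lra). exact Hsq.
Qed.
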